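(* Let $G$ be a finite group with a cyclic maximal subgroup. Then $G$ is solvable and $G''\leq Z(G)$.
   Context: $G''=[G',G']$ is the second derived subgroup and $Z(G)$ is the center of $G$. *)

(* Defs.v *)
From mathcomp Require Import all_boot all_order all_fingroup all_solvable.

(* Main.v *)
Require Import Defs.
From mathcomp Require Import all_boot all_order all_fingroup all_solvable.
From mathcomp Require Import all_character.
Set Implicit Arguments.
Unset Strict Implicit.
Unset Printing Implicit Defensive.
Local Open Scope group_scope.

Lemma max_mid (gT : finGroupType) (G M H : {group gT}) :
  maximal M G -> M \subset H -> H \subset G -> H :=: M \/ H :=: G.
Proof.
case/maxgroupP => _ maxM sMH sHG.
have [->|neHG] := eqVneq H G; first by right.
left; by rewrite (maxM H) // properEneq neHG sHG.
Qed.

Lemma frob_part (gT : finGroupType) (G M : {group gT}) :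
  maximal M G -> cyclic M -> M :!=: 1 ->
  (forall g, g \in G -> g \notin M -> M :&: M :^ g \subset [1 gT]) ->
  G^`(2) = 1.
Proof.
move=> maxM cycM ntM TI.
have prMG := maxgroupp maxM.
have sMG := proper_sub prMG.
have frobG : [Frobenius G with complement M].
  apply/andP; split; first by rewrite proper_neq.
  apply/normedTI_P; split.
  - by rewrite setD_eq0 subG1.
  - by rewrite subsetI sMG normD1 normG.
  move=> g Gg; apply: contraR => notM.
  by rewrite -setI_eq0 conjD1g -setDIl setD_eq0 TI.
have [N frobN] := Frobenius_kernel_exists frobG.
have [defG ntN _ _ _] := Frobenius_context frobN.
have [_ defNM nNM tiNM] := sdprodP defG.
have /mulG_sub[sNG _] := defNM.
have coNM := Frobenius_coprime frobN.
have allN : forall X : {group gT}, X \subset N -> M \subset 'N(X) -> X :!=: 1 ->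
    X :=: N.
  move=> X sXN nXM ntX.
  have sMH : M \subset M <*> X by apply: joing_subl.
  have sHG : M <*> X \subset G by rewrite join_subG sMG (subset_trans sXN sNG).
  have tiMX : M :&: X = 1.
    apply/trivgP; rewrite -tiNM setIC; exact: setIS.
  case: (max_mid maxM sMH sHG) => [HM | HG].
    case/negP: ntX; rewrite -subG1 -tiNM subsetI sXN -HM; exact: joing_subr.
  apply/eqP; rewrite eqEcard sXN /=.
  have := sdprod_card defG; rewrite -HG /=.
  rewrite (norm_joinEl nXM) (TI_cardMg tiMX) mulnC.
  by move/eqP; rewrite eqn_pmul2l ?cardG_gt0 // => /eqP ->.
pose p := pdiv #|N|.
have [P sylP nPM] :=
  sol_coprime_Sylow_exists p (abelian_sol (cyclic_abelian cycM)) nNM coNM.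
have ntP : P :!=: 1.
  rewrite -cardG_gt1 (card_Hall sylP) p_part_gt1 pi_pdiv cardG_gt1 //.
have PN : P :=: N := allN P (pHall_sub sylP) nPM ntP.
have pN : p.-group N by rewrite -PN; exact: pHall_pgroup sylP.
have ntZ : 'Z(N) :!=: 1.
  by apply: contraNneq ntN => Z1; rewrite (trivg_center_pgroup pN Z1).
have ZN := allN _ (center_sub N) (char_norm_trans (center_char N) nNM) ntZ.
have abN : abelian N by apply/center_idP.
have nNG : G \subset 'N(N) by rewrite -defNM mul_subG ?normG.
have sG'N : G^`(1) \subset N.
  apply: der1_min nNG _.
  by rewrite -defNM quotientMidl quotient_abelian ?cyclic_abelian.
apply/trivgP; apply: subset_trans (commgSS sG'N sG'N) _.
by have := derG1P abN; rewrite derg1 => ->.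
Qed.

Theorem proposition2p4 (gT : finGroupType) (G M : {group gT}) :
  maximal M G -> cyclic M -> solvable G /\ G^`(2) \subset 'Z(G).
Proof.
move=> maxM cycM.
have prMG := maxgroupp maxM.
have sMG := proper_sub prMG.
suff sG2Z : G^`(2) \subset 'Z(G).
  split=> //; apply/derivedP; exists 3.
  apply/trivgP.
  apply: subset_trans (commgSS sG2Z sG2Z) _.
  by have := derG1P (center_abelian G); rewrite derg1 => ->.
have [nMG | nMG] := boolP (G \subset 'N(M)).
  have [_ [x Gx notMx]] := properP prMG.
  have sMH : M \subset M <*> <[x]> by apply: joing_subl.
  have sHG : M <*> <[x]> \subset G by rewrite join_subG sMG cycle_subG.
  have nMx : <[x]> \subset 'N(M) by rewrite cycle_subG (subsetP nMG).
  case: (max_mid maxM sMH sHG) => [HM | HG].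
    by case/negP: notMx; rewrite -HM; apply/(subsetP (joing_subr _ _))/cycle_id.
  have sG'M : G^`(1) \subset M.
    apply: der1_min nMG _.
    rewrite -HG /= joingC (norm_joinEl nMx) quotientMidr.
    by rewrite quotient_abelian ?cycle_abelian.
  apply: subset_trans (sub1G _).
  apply: subset_trans (commgSS sG'M sG'M) _.
  by have := derG1P (cyclic_abelian cycM); rewrite derg1 => ->.
pose K := gcore M G.
have nsKG : K <| G := gcore_normal sMG.
have sKM : K \subset M := gcore_sub M G.
have nKG : G \subset 'N(K) := normal_norm nsKG.
have NGM : forall g, g \in G -> g \notin M -> g \notin 'N(M).
  move=> g Gg notM; apply: contra nMG => nMg.
  have sMH : M \subset 'N_G(M) by rewrite subsetI sMG normG.
  case: (max_mid maxM sMH (subsetIl _ _)) => [HM | HG].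
    by case/negP: notM; rewrite -HM inE Gg.
  by rewrite -HG subsetIr.
have TI : forall g, g \in G -> g \notin M -> M :&: M :^ g \subset K.
  move=> g Gg notM.
  have sMH : M \subset M <*> (M :^ g)%G by apply: joing_subl.
  have sMgG : M :^ g \subset G by rewrite sub_conjg conjGid ?groupV.
  have sHG : M <*> (M :^ g)%G \subset G by rewrite join_subG sMG.
  have nDG : G \subset 'N(M :&: M :^ g).
    case: (max_mid maxM sMH sHG) => [HM | HG].
      case/negP: (NGM g Gg notM); apply/normP/eqP.
      rewrite eqEcard cardJg leqnn andbT.
      by move: (joing_subr M (M :^ g)); rewrite (_ : M <*> M :^ g = M).

    rewrite -HG join_subG.
    have cD1 : (M :&: M :^ g)%G \char M by rewrite sub_cyclic_char // subsetIl.
    have cD2 : (M :&: M :^ g)%G \char (M :^ g)%G.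
      by rewrite sub_cyclic_char ?cyclicJ // subsetIr.
    by rewrite (char_norm cD1) (char_norm cD2).
  by rewrite sub_gcore // subsetIl.
have nsKM : K <| M := normalS sKM sMG nsKG.
have nKM : M \subset 'N(K) := subset_trans sMG nKG.
have sG2K : G^`(2) \subset K.
  rewrite -(quotient_sub1 (subset_trans (der_sub 2 G) nKG)) quotient_der //.
  rewrite (@frob_part _ (G / K)%G (M / K)%G) //.
  - by rewrite quotient_maximal.
  - exact: quotient_cyclic.
  - apply: contra nMG; rewrite -subG1 quotient_sub1 // => sMK.
    by rewrite (_ : gval M = gval K) //; apply/eqP; rewrite eqEsubset sMK sKM.
  move=> gb; case/morphimP => g Ng Gg -> notMgb.
  have notM : g \notin M by apply: contra notMgb; apply: mem_quotient.
  rewrite -quotientJ // -quotientGI //.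
  by rewrite quotientS1 // TI.
have sKZ : K \subset 'Z(G).
  have sMC : M \subset 'C_G(K).
    by rewrite subsetI sMG sub_abelian_cent ?cyclic_abelian.
  case: (max_mid maxM sMC (subsetIl _ _)) => [CM | CG].
    case/negP: nMG.
    have := subcent_normal G K; rewrite (setIidPl nKG) CM.
    by case/andP.
  rewrite subsetI (normal_sub nsKG) centsC.
  by move: (subsetIr G 'C(K)); rewrite CG.
exact: subset_trans sG2K sKZ.
Qed.
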